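(* Let $X$ be a compactum with compatible metric $d$, let $n\geq2$, and let $f:X\to X$ be a function. Consider the statements: (1) $f$ is accessible; (2) $F_n(f)$ is accessible; (3) $SF_n(f)$ is accessible. Then (2) implies (1), and (2) implies (3).
   Context: A compactum is a nondegenerate compact, perfect, Hausdorff topological space. $F_n(X)$ is the set of nonempty subsets of $X$ with at most $n$ points, with the Hausdorff metric $d_H$; $F_1(X)=\{\{x\}:x\in X\}$; $F_n(f)(A)=f(A)$. $SF_n(X)=F_n(X)/F_1(X)$ is the quotient collapsing $F_1(X)$ to a point, $q$ the quotient map, $F_X=q(F_1(X))$, and $SF_n(f)(\chi)=q(F_n(f)(q^{-1}(\chi)))$ for $\chi\neq F_X$, $SF_n(f)(F_X)=F_X$. $SF_n(X)$ carries the metric $\rho(\chi_1,\chi_2)=\mathcal{H}^2(F_1(X)\cup q^{-1}(\chi_1),F_1(X)\cup q^{-1}(\chi_2))$, with $\mathcal{H}^2$ the Hausdorff metric on closed subsets of $F_n(X)$ induced by $d_H$. A function $g$ on a metric space $(Z,D)$ is accessible if for every $\varepsilon>0$ and all nonempty open $U,V\subseteq Z$ there exist $x\in U$, $y\in V$ and $m\in\mathbb{N}$ with $D(g^m(x),g^m(y))<\varepsilon$ (with $D=d,d_H,\rho$ for $f,F_n(f),SF_n(f)$). *)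

(* Defs.v *)
From Stdlib Require List.
From HB Require Import structures.
From mathcomp Require Import all_boot all_order all_algebra.
From mathcomp Require Import all_classical all_reals.
Set Implicit Arguments. Unset Strict Implicit. Unset Printing Implicit Defensive.
Import Order.TTheory GRing.Theory Num.Theory.
Local Open Scope classical_set_scope.
Local Open Scope ring_scope.

Definition is_metric {R : realType} {T : Type} (d : T -> T -> R) : Prop :=
  (forall x y, 0 <= d x y) /\
  (forall x y, d x y = 0 <-> x = y) /\
  (forall x y, d x y = d y x) /\
  (forall x y z, d x z <= d x y + d y z).

Definition open_in {R : realType} {Z : Type} (S : set Z) (D : Z -> Z -> R)
  (U : set Z) : Prop :=
  U `<=` S /\
  forall x, U x -> exists2 r : R, 0 < r &
    forall y, S y -> D x y < r -> U y.

Definition metric_compact {R : realType} {T : Type} (d : T -> T -> R) : Prop :=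
  forall (I : Type) (U : I -> set T),
    (forall i, open_in setT d (U i)) ->
    (forall x, exists i, U i x) ->
    exists s : seq I, forall x, exists2 i, List.In i s & U i x.

Definition metric_perfect {R : realType} {T : Type} (d : T -> T -> R) : Prop :=
  forall x (e : R), 0 < e -> exists y, y <> x /\ d x y < e.

(* compactum: nondegenerate compact perfect (Hausdorff, being metric) *)
Definition compactum {R : realType} {T : Type} (d : T -> T -> R) : Prop :=
  is_metric d /\ metric_compact d /\ metric_perfect d /\
  exists x y : T, x <> y.

Definition accessible {R : realType} {Z : Type} (S : set Z) (D : Z -> Z -> R)
  (g : Z -> Z) : Prop :=
  forall (eps : R), 0 < eps ->
  forall U V : set Z, open_in S D U -> open_in S D V ->
    (exists u, U u) -> (exists v, V v) ->
    exists x y (m : nat), [/\ U x, V y, (0 < m)%N &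
      D (iter m g x) (iter m g y) < eps].

Definition dist_pt {R : realType} {Z : Type} (D : Z -> Z -> R) (x : Z)
  (B : set Z) : R := inf [set D x b | b in B].

Definition hausdorff {R : realType} {Z : Type} (D : Z -> Z -> R)
  (A B : set Z) : R :=
  Num.max (sup [set dist_pt D a B | a in A]) (sup [set dist_pt D b A | b in B]).

Definition Fn {T : Type} (n : nat) : set (set T) :=
  [set A | (exists x, A x) /\
           exists s : seq T, (size s <= n)%N /\ A = [set x | List.In x s]].

Definition F1 {T : Type} : set (set T) := [set A | exists x : T, A = [set x]].

Definition Fn_map {T : Type} (f : T -> T) (A : set T) : set T := f @` A.

(* the quotient map q : F_n(X) -> SF_n(X); a point of SF_n(X) is represented
   by its fibre q^{-1}(chi), i.e. F_1(X) or a singleton {A} with A not in F_1 *)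
Definition qcls {T : Type} (A : set T) : set (set T) :=
  [set C | (F1 A /\ F1 C) \/ C = A].

Definition SFn {T : Type} (n : nat) : set (set (set T)) :=
  [set c | exists2 A, Fn n A & c = qcls A].

(* SF_n(f)(chi) = q(F_n(f)(q^{-1}(chi))) *)
Definition SFn_map {T : Type} (f : T -> T) (c : set (set T)) : set (set T) :=
  [set C | exists2 A, c A & qcls (Fn_map f A) C].

Definition rho {R : realType} {T : Type} (d : T -> T -> R)
  (c1 c2 : set (set T)) : R :=
  hausdorff (hausdorff d) (F1 `|` c1) (F1 `|` c2).

(* Main.v *)
Require Import Defs.
From HB Require Import structures.
From mathcomp Require Import all_boot all_order all_algebra.
From mathcomp Require Import all_classical all_reals.
Import Order.TTheory GRing.Theory Num.Theory.
Local Open Scope classical_set_scope.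
Local Open Scope ring_scope.

Section Aux.
Variable R : realType.

Lemma sup_ge0' (E : set R) : (forall x, E x -> 0 <= x) -> 0 <= sup E.
Proof.
move=> h; have [hs|hs] := pselect (has_sup E); last by rewrite sup_out.
case: (hs) => [[e Ee] _]; apply: le_trans (h _ Ee) _.
exact: sup_upper_bound.
Qed.

Lemma inf_ge0' (E : set R) : (forall x, E x -> 0 <= x) -> 0 <= inf E.
Proof.
move=> h; have [->|ne] := eqVneq E set0; first by rewrite inf0.
apply: lb_le_inf; first exact/set0P.
by move=> x /h.
Qed.

Lemma inf_le' (E : set R) y : (forall x, E x -> 0 <= x) -> E y -> inf E <= y.
Proof.
move=> h Ey; apply: ge_inf => //; by exists 0 => x /h.
Qed.

Lemma sup_le' (E : set R) y : has_ubound E -> E y -> y <= sup E.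
Proof. by move=> hu Ey; apply: sup_upper_bound => //; split => //; exists y. Qed.

Variable Z : Type.
Implicit Types D : Z -> Z -> R.

Lemma dist_pt_ge0 D a B : (forall x y, 0 <= D x y) -> 0 <= dist_pt D a B.
Proof. by move=> h; apply: inf_ge0' => _ [b _ <-]. Qed.

Lemma haus_ge0 D A B : (forall x y, 0 <= D x y) -> 0 <= hausdorff D A B.
Proof.
move=> h; rewrite /hausdorff le_max; apply/orP; left.
by apply: sup_ge0' => _ [a _ <-]; apply: dist_pt_ge0.
Qed.

Lemma dist_pt_le D a B b : (forall x y, 0 <= D x y) -> B b ->
  dist_pt D a B <= D a b.
Proof.
move=> h Bb; apply: inf_le'; last by exists b.
by move=> _ [c _ <-].
Qed.

Lemma haus_symm D A B : hausdorff D A B = hausdorff D B A.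
Proof. by rewrite /hausdorff maxC. Qed.

Lemma haus_le D A B M : (exists a, A a) -> (exists b, B b) ->
  (forall a, A a -> dist_pt D a B <= M) ->
  (forall b, B b -> dist_pt D b A <= M) -> hausdorff D A B <= M.
Proof.
move=> [a Aa] [b Bb] hA hB; rewrite /hausdorff ge_max; apply/andP; split.
  apply: ge_sup; first by exists (dist_pt D a B), a.
  by move=> _ [x Ax <-]; apply: hA.
apply: ge_sup; first by exists (dist_pt D b A), b.
by move=> _ [x Ax <-]; apply: hB.
Qed.

Lemma haus_ge_l D A B a : has_ubound [set dist_pt D x B | x in A] -> A a ->
  dist_pt D a B <= hausdorff D A B.
Proof.
move=> hu Aa; rewrite /hausdorff le_max; apply/orP; left.
by apply: sup_le' => //; exists a.
Qed.

Lemma haus_ge_r D A B b : has_ubound [set dist_pt D x A | x in B] -> B b ->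
  dist_pt D b A <= hausdorff D A B.
Proof. by move=> hu Bb; rewrite haus_symm; apply: haus_ge_l. Qed.

Lemma fin_ub (s : seq Z) (g : Z -> R) (A : set Z) :
  A `<=` [set x | List.In x s] -> has_ubound [set g a | a in A].
Proof.
move=> sub.
have [M HM] : exists M, forall x, List.In x s -> g x <= M.
  elim: s {sub} => [|x s [M HM]]; first by exists 0.
  exists (Num.max (g x) M) => y [<-|/HM]; rewrite le_max ?lexx //.
  by move=> ->; rewrite orbT.
by exists M => _ [a /sub Aa <-]; apply: HM.
Qed.

End Aux.

Section Main.
Variables (R : realType) (T : Type) (d : T -> T -> R).
Hypothesis d0 : forall x y, 0 <= d x y.
Hypothesis dxx : forall x, d x x = 0.
Variable x0 : T.

Lemma H_ge0 : forall A B, 0 <= hausdorff d A B.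
Proof. by move=> A B; apply: haus_ge0. Qed.

Lemma H_single x : hausdorff d [set x] [set x] <= 0.
Proof.
apply: haus_le; try by exists x.
  by move=> a ->; rewrite -(dxx x); apply: dist_pt_le.
by move=> a ->; rewrite -(dxx x); apply: dist_pt_le.
Qed.

Lemma rho_le (A B : set T) : rho d (qcls A) (qcls B) <= hausdorff d A B.
Proof.
have key : forall A B, forall p, (F1 `|` qcls A) p ->
    dist_pt (hausdorff d) p (F1 `|` qcls B) <= hausdorff d A B.
  move=> A1 B1 p [Fp|[[_ Fp]|->]].
  - apply: le_trans (@dist_pt_le _ _ (hausdorff d) p _ p (@H_ge0) _) _.
      by left; exact Fp.
    by case: Fp => x ->; apply: le_trans (H_single x) (H_ge0 _ _).
  - apply: le_trans (@dist_pt_le _ _ (hausdorff d) p _ p (@H_ge0) _) _.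
      by left; exact Fp.
    by case: Fp => x ->; apply: le_trans (H_single x) (H_ge0 _ _).
  - apply: le_trans (@dist_pt_le _ _ (hausdorff d) A1 _ B1 (@H_ge0) _) _.
      by right; right.
    by [].
apply: haus_le.
- by exists [set x0]; left; exists x0.
- by exists [set x0]; left; exists x0.
- by move=> a Pa; apply: key.
- by move=> b Qb; rewrite haus_symm; apply: key.
Qed.

Lemma SFn_map_qcls (f : T -> T) (B : set T) :
  SFn_map f (qcls B) = qcls (Fn_map f B).
Proof.
apply/seteqP; split => C.
  case=> A' [[FB FA']|->] //.
  case: FA' => x ->; rewrite /Fn_map image_set1 => -[[_ FC]|->]; left.
    by split=> //; case: FB => y ->; rewrite image_set1; exists (f y).
  by split; [case: FB => y ->; rewrite image_set1; exists (f y)|exists (f x)].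
by move=> h; exists B => //; right.
Qed.

Lemma iter_SFn (f : T -> T) m (A : set T) :
  iter m (SFn_map f) (qcls A) = qcls (iter m (Fn_map f) A).
Proof. by elim: m => //= m ->; rewrite SFn_map_qcls. Qed.

Lemma iter_Fn (f : T -> T) m (A : set T) :
  iter m (Fn_map f) A = iter m f @` A.
Proof.
elim: m => [|m IH] /=.
  by apply/seteqP; split => [x Ax|_ [x Ax <-]] //; exists x.
rewrite IH /Fn_map; apply/seteqP; split.
  by move=> _ [_ [x Ax <-] <-]; exists x.
by move=> _ [x Ax <-]; exists (iter m f x) => //; exists x.
Qed.

End Main.

Theorem theorem7 (R : realType) (T : Type) (d : T -> T -> R) (n : nat)
  (f : T -> T) :
  compactum d -> (2 <= n)%N ->
  accessible (Fn n) (hausdorff d) (Fn_map f) ->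
  accessible setT d f /\
  accessible (SFn n) (rho d) (SFn_map f).
Proof.
move=> [[d0 [dE [dsym _]]] [_ [_ [x0 [_ _]]]]] n2 acc.
have dxx : forall x, d x x = 0 by move=> x; apply/dE.
split.
- move=> eps eps0 U V [_ oU] [_ oV] [u Uu] [v Vv].
  pose U' := [set A | Fn n A /\ A `<=` U].
  pose V' := [set A | Fn n A /\ A `<=` V].
  have opn : forall W, (forall x, W x -> exists2 r : R, 0 < r &
      forall y, setT y -> d x y < r -> W y) ->
      open_in (Fn n) (hausdorff d) [set A | Fn n A /\ A `<=` W].
    move=> W oW; split; first by move=> A [].
    move=> A [[Ane [s [ss Ae]]] AW].
    have [r r0 hr] : exists2 r : R, 0 < r & forall a, List.In a s ->
        forall y, d a y < r -> W y.
      have : forall a, List.In a s -> W a by move=> a ha; apply: AW; rewrite Ae.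
      elim: s {ss Ae} => [|a s IH] hs; first by exists 1.
      have [ra ra0 hra] := oW a (hs a (or_introl erefl)).
      have [rs rs0 hrs] := IH (fun b hb => hs b (or_intror hb)).
      exists (Num.min ra rs); first by rewrite lt_min ra0 rs0.
      move=> b [<-|hb] y; rewrite lt_min => /andP[h1 h2].
        by apply: hra.
      by apply: hrs hb _ h2.
    exists r => // B FB hAB; split => //; case: FB => Bne [t [tt Be]].
    move=> b Bb.
    have h1 : dist_pt d b A < r.
      apply: le_lt_trans hAB; apply: haus_ge_r => //.
      by apply: (@fin_ub _ _ t); rewrite Be.
    have ne : [set d b a | a in A] !=set0.
      by case: Ane => a Aa; exists (d b a), a.
    have [_ [a Aa <-] hda] := inf_lt ne h1.
    move: Aa; rewrite Ae => Aa.
    by apply: hr Aa _ _; rewrite dsym.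
  have F1n : forall w : T, Fn n [set w].
    move=> w; split; first by exists w.
    exists [:: w]; split; first by apply: leq_trans n2.
    by apply/seteqP; split => x /=; [move->; left|case=> [<-|[]]].
  have su : [set u] `<=` U by move=> x ->.
  have sv : [set v] `<=` V by move=> x ->.
  have [A [B [m [[[[a Aa] [s [_ Ae]]] AU] [[[b Bb] _] BV] m0 hm]]]] :=
    acc eps eps0 U' V' (opn U oU) (opn V oV)
      (ex_intro _ [set u] (conj (F1n u) su))
      (ex_intro _ [set v] (conj (F1n v) sv)).
  rewrite !iter_Fn in hm.
  have h1 : dist_pt d (iter m f a) (iter m f @` B) < eps.
    apply: le_lt_trans hm; apply: haus_ge_l; last by exists a.
    apply: (@fin_ub _ _ (List.map (iter m f) s)).
    by move=> _ [x Ax <-]; apply: List.in_map; move: Ax; rewrite Ae.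
  have ne : [set d (iter m f a) y | y in iter m f @` B] !=set0.
    by exists (d (iter m f a) (iter m f b)), (iter m f b) => //; exists b.
  have [_ [_ [y By <-] <-] hda] := inf_lt ne h1.
  by exists a, y, m; split => //; [apply: AU|apply: BV].
move=> eps eps0 U V oU oV hu hv.
have opn : forall W, open_in (SFn n) (rho d) W ->
    open_in (Fn n) (hausdorff d) [set A | Fn n A /\ W (qcls A)].
  move=> W [_ oW]; split; first by move=> A [].
  move=> A [FA WA]; have [r r0 hr] := oW _ WA; exists r => // B FB hAB.
  split => //; apply: hr; first by exists B.
  exact: le_lt_trans (@rho_le _ _ d d0 dxx x0 A B) hAB.
have ne : forall W, open_in (SFn n) (rho d) W -> (exists w, W w) ->
    exists A, Fn n A /\ W (qcls A).
  move=> W [sW _] [w Ww]; have [A FA e] := sW _ Ww.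
  by exists A; split => //; rewrite -e.
have [A [B [m [[_ UA] [_ VB] m0 hm]]]] :=
  acc eps eps0 _ _ (opn U oU) (opn V oV) (ne U oU hu) (ne V oV hv).
exists (qcls A), (qcls B), m; split => //; rewrite !iter_SFn.
exact: le_lt_trans (@rho_le _ _ d d0 dxx x0 _ _) hm.
Qed.
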